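(* Let $(G,+)$ be an abelian group with identity $0$, and let $M$ and $N$ be matroids over $G$, both of rank $n$, such that $|E(M)|=|E(N)|=n+1<p(G)$. Assume further that $N$ is a coloopless sparse paving matroid. If $0\notin E(N)$, then $M$ is matched to $N$.
   Context: $p(G)$ denotes the smallest cardinality of a nonzero subgroup of $G$. A matroid over $G$ is a matroid $M$ whose finite ground set $E(M)$ is a subset of $G$; all matroids are assumed loopless. A matroid of rank $n$ is paving if every $(n-1)$-element subset of its ground set is independent; it is sparse paving if both it and its dual matroid are paving. A coloop is an element belonging to every basis; a matroid is coloopless if it has no coloop. For matroids $M,N$ over $G$ with $r(M)=r(N)=n>0$ and bases $\mathcal{M}=\{a_1,\dots,a_n\}$ of $M$ and $\mathcal{N}=\{b_1,\dots,b_n\}$ of $N$, $\mathcal{M}$ is matched to $\mathcal{N}$ if there is a permutation $\pi\in S_n$ with $a_i+b_{\pi(i)}\notin E(M)$ for all $i$. $M$ is matched to $N$ if for every basis $\mathcal{M}$ of $M$ there exists a basis $\mathcal{N}$ of $N$ such that $\mathcal{M}$ is matched to $\mathcal{N}$. *)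

(* Defs.v *)
From HB Require Import structures.
From mathcomp Require Import all_boot all_order all_algebra.
From mathcomp Require Import finmap.
Set Implicit Arguments. Unset Strict Implicit. Unset Printing Implicit Defensive.
Import GRing.Theory.
Local Open Scope fset_scope.
Local Open Scope ring_scope.

Record matroid (G : choiceType) := Matroid {
  ground : {fset G};
  basis : {fset G} -> Prop;
  basis_sub : forall B, basis B -> B `<=` ground;
  basis_ex : exists B, basis B;
  basis_exchange : forall B1 B2, basis B1 -> basis B2 ->
    forall x, x \in B1 `\` B2 ->
    exists2 y, y \in B2 `\` B1 & basis (y |` (B1 `\ x))
}.

Section MatroidDefs.
Variable G : choiceType.
Implicit Type M : matroid G.

Definition indep_in (bas : {fset G} -> Prop) (S : {fset G}) :=
  exists2 B, bas B & S `<=` B.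

Definition independent M S := indep_in (basis M) S.

Definition has_rank M (n : nat) := forall B, basis M B -> #|` B| = n.

Definition loopless M := forall x, x \in ground M -> exists2 B, basis M B & x \in B.

Definition is_coloop M x := x \in ground M /\ forall B, basis M B -> x \in B.
Definition coloopless M := forall x, ~ is_coloop M x.

Definition dual_basis M (B : {fset G}) :=
  exists2 B0, basis M B0 & B = ground M `\` B0.

Definition paving_on (E : {fset G}) (bas : {fset G} -> Prop) :=
  forall B0, bas B0 -> forall S, S `<=` E -> #|` S| = (#|` B0|).-1 ->
    indep_in bas S.

Definition paving M := paving_on (ground M) (basis M).
Definition dual_paving M := paving_on (ground M) (dual_basis M).
Definition sparse_paving M := paving M /\ dual_paving M.
End MatroidDefs.

Section GroupDefs.
Variable G : zmodType.

Definition is_subgroup (H : G -> Prop) :=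
  H 0 /\ (forall x y, H x -> H y -> H (x - y)).

(* k < p(G): every nonzero subgroup of G has more than k elements
   (possibly infinitely many) *)
Definition lt_pG (k : nat) :=
  forall H : G -> Prop, is_subgroup H -> (exists x, H x /\ x <> 0) ->
    forall s : {fset G}, (forall x, H x -> x \in s) -> (k < #|` s|)%N.

Definition basis_matched (M : matroid G) (BM BN : {fset G}) :=
  exists f : G -> G, {in BM &, injective f} /\ f @` BM = BN /\
    forall a, a \in BM -> a + f a \notin ground M.

Definition matched (M N : matroid G) :=
  forall BM, basis M BM -> exists2 BN, basis N BN & basis_matched M BM BN.
End GroupDefs.

(* Main.v *)
Require Import Defs.
From mathcomp Require Import all_boot all_order all_algebra.
From mathcomp Require Import finmap zify.
From Stdlib Require Import Classical.
Import GRing.Theory.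
Local Open Scope fset_scope.
Local Open Scope ring_scope.


Definition nbh {T U : choiceType} (R : T -> U -> bool) (B : {fset U}) (S : {fset T}) : {fset U} :=
  [fset b in B | [exists a : S, R (val a) b]].

Lemma fsubT {K : choiceType} {A B C : {fset K}} : A `<=` B -> B `<=` C -> A `<=` C.
Proof. move=> h1 h2; exact: fsubset_trans h1 h2. Qed.

Lemma nbhP (T U : choiceType) (R : T -> U -> bool) B S b :
  reflect (b \in B /\ exists2 a, a \in S & R a b) (b \in nbh R B S).
Proof.
rewrite /nbh !inE /=; apply: (iffP andP) => [[hb /existsP [a ha]] | [hb [a ha hab]]].
  by split => //; exists (val a) => //; exact: fsvalP.
by split => //; apply/existsP; exists [` ha].
Qed.

Lemma nbhS (T U : choiceType) (R : T -> U -> bool) B B' S S' :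
  B `<=` B' -> S `<=` S' -> nbh R B S `<=` nbh R B' S'.
Proof.
move=> hB hS; apply/fsubsetP => b /nbhP [hb [a ha hab]]; apply/nbhP; split.
  exact: (fsubsetP hB).
by exists a => //; exact: (fsubsetP hS).
Qed.

Lemma hall (T U : choiceType) (R : T -> U -> bool) (u0 : U) k :
  forall (S : {fset T}) (B : {fset U}), (#|`S| <= k)%N ->
  (forall S', S' `<=` S -> (#|`S'| <= #|`nbh R B S'|)%N) ->
  exists f : T -> U, {in S &, injective f} /\
    forall a, a \in S -> f a \in B /\ R a (f a).
Proof.
elim: k => [|k IH] S B hk hH.
  move: hk; rewrite leqn0 cardfs_eq0 => /eqP ->.
  by exists (fun _ => u0); split => [x y|x]; rewrite inE.
case: (eqVneq S fset0) => [->|hS0].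
  by exists (fun _ => u0); split => [x y|x]; rewrite inE.
have [a ha] := fset0Pn _ hS0.
destruct (classic (exists S', [/\ S' `<=` S, S' != fset0, S' != S &
   (#|`nbh R B S'| <= #|`S'|)%N])) as [[S' [hS'S hS'0 hS'S2 hN']] | hno].
  have hprop : S' `<` S by rewrite fproperEneq hS'S2 hS'S.
  have hk1 : (#|`S'| <= k)%N.
    by have := fproper_ltn_card hprop; lia.
  have [f1 [inj1 hf1]] := IH S' B hk1 (fun W hW => hH W (fsubT hW hS'S)).
  set N' := nbh R B S' in hN'.
  have hS2k : (#|`(S `\` S')| <= k)%N.
    rewrite cardfsDS //; have := cardfs_gt0 S'; rewrite hS'0; lia.
  have hH2 : forall W, W `<=` S `\` S' -> (#|`W| <= #|`nbh R (B `\` N') W|)%N.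
    move=> W hW.
    have hWS : W `<=` S by apply: fsubT hW (fsubsetDl _ _).
    have hWd : W `&` S' = fset0.
      apply/eqP; rewrite -fsubset0; apply/fsubsetP => x; rewrite inE => /andP[hx hx'].
      by have := fsubsetP hW x hx; rewrite inE hx'.
    have h1 := hH (W `|` S') ltac:(by rewrite fsubUset hWS hS'S).
    have h2 := cardfsUI W S'; rewrite hWd cardfs0 addn0 in h2.
    have h3 : nbh R B (W `|` S') `\` N' `<=` nbh R (B `\` N') W.
      apply/fsubsetP => b; rewrite inE => /andP[hbN /nbhP [hb [x hx hxb]]].
      apply/nbhP; split; first by rewrite inE hbN hb.
      exists x => //; move: hx; rewrite inE => /orP[//|hx].
      by move: hbN; rewrite /N'; case/negP; apply/nbhP; split => //; exists x.
    have h4 := cardfsD (nbh R B (W `|` S')) N'.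
    have h5 : (#|` nbh R B (W `|` S') `&` N'| <= #|`N'|)%N.
      by apply: fsubset_leq_card; apply: fsubsetIr.
    have h6 := fsubset_leq_card h3.
    lia.
  have [f2 [inj2 hf2]] := IH (S `\` S') (B `\` N') hS2k hH2.
  exists (fun x => if x \in S' then f1 x else f2 x); split.
    move=> x y hx hy /=.
    have f1N : forall z, z \in S' -> f1 z \in N'.
      move=> z hz; have [hz1 hz2] := hf1 z hz; by apply/nbhP; split => //; exists z.
    have f2N : forall z, z \in S -> z \notin S' -> f2 z \notin N'.
      move=> z hz hz'; have [hz1 _] := hf2 z ltac:(by rewrite inE hz' hz).
      by move: hz1; rewrite inE => /andP[].
    case hxs: (x \in S'); case hys: (y \in S').
    - exact: inj1.
    - by move=> e; move: (f2N y hy (negbT hys)); rewrite -e (f1N x hxs).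
    - by move=> e; move: (f2N x hx (negbT hxs)); rewrite e (f1N y hys).
    - by apply: inj2; rewrite inE ?hxs ?hys ?hx ?hy.
  move=> x hx; case hxs: (x \in S'); first exact: hf1.
  have [h1 h2] := hf2 x ltac:(by rewrite inE hxs hx).
  by move: h1 => /fsetDP [].
have hS1 : forall S', S' `<=` S -> S' != fset0 -> S' != S ->
    (#|`S'| < #|`nbh R B S'|)%N.
  by move=> S' h1 h2 h3; rewrite ltnNge; apply/negP => h; apply: hno; exists S'.
have hN1 := hH [fset a] ltac:(by rewrite fsub1set ha).
rewrite cardfs1 cardfs_gt0 in hN1.
have [b /nbhP [hb [a' ha' hab]]] := fset0Pn _ hN1.
move: ha'; rewrite inE => /eqP ea; subst a'.
have hk1 : (#|`(S `\ a)| <= k)%N.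
  by have := cardfsD1 a S; rewrite ha /=; lia.
have hH1 : forall W, W `<=` S `\ a -> (#|`W| <= #|`nbh R (B `\ b) W|)%N.
  move=> W hW; case: (eqVneq W fset0) => [->|hW0]; first by rewrite cardfs0.
  have hWS : W `<=` S by apply: fsubT hW (fsubsetDl _ _).
  have hWneq : W != S.
    apply/negP => /eqP eW; move: (fsubsetP hW a); rewrite eW ha => /(_ isT).
    by rewrite !inE eqxx.
  have h := hS1 W hWS hW0 hWneq.
  have h2 := cardfsD1 b (nbh R B W).
  have h3 : nbh R B W `\ b `<=` nbh R (B `\ b) W.
    apply/fsubsetP => c; rewrite inE => /andP[hcb /nbhP [hc [x hx hxc]]].
    by apply/nbhP; split; [rewrite inE hcb hc | exists x].
  have h4 := fsubset_leq_card h3.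
  have h5 := leq_b1 (b \in nbh R B W).
  lia.
have [f1 [inj1 hf1]] := IH (S `\ a) (B `\ b) hk1 hH1.
have f1b : forall z, z \in S -> z != a -> f1 z != b.
  move=> z hz hza; have [h _] := hf1 z ltac:(by apply/fsetD1P).
  by move: h => /fsetD1P [].
exists (fun x => if x == a then b else f1 x); split.
  move=> x y hx hy /=.
  case: (eqVneq x a) => [->|hxa]; case: (eqVneq y a) => [->|hya] //.
  - by move=> e; have := f1b y hy hya; rewrite -e eqxx.
  - by move=> e; have := f1b x hx hxa; rewrite e eqxx.
  - by apply: inj1; apply/fsetD1P.
move=> x hx; case: (eqVneq x a) => [->|hxa]; first by [].
have [h1 h2] := hf1 x ltac:(by apply/fsetD1P).
by move: h1 => /fsetD1P [].
Qed.

Lemma card_transl (G : zmodType) (X : {fset G}) (e : G) :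
  #|` [fset (e + x)%R | x in X]| = #|` X|.
Proof. rewrite card_in_imfset //= => a b _ _; apply: addrI. Qed.

Lemma card_transr (G : zmodType) (X : {fset G}) (e : G) :
  #|` [fset (x - e)%R | x in X]| = #|` X|.
Proof. rewrite card_in_imfset //= => a b _ _; apply: addIr. Qed.

Lemma dyson (G : zmodType) (m : nat) : lt_pG G m -> forall k (X Y A : {fset G}) x0,
  (#|`Y| <= k)%N -> x0 \in X -> 0 \in Y ->
  (forall x y, x \in X -> y \in Y -> x + y \in A) -> (#|`A| <= m)%N ->
  (#|`X| + #|`Y| <= #|`A| + 1)%N.
Proof.
move=> hp; elim=> [|k IH] X Y A x0 hY hx0 h0 hXY hA.
  by move: hY; rewrite leqn0 cardfs_eq0 => /eqP Y0; rewrite Y0 inE in h0.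
have hXA : (#|`X| <= #|`A|)%N.
  apply: fsubset_leq_card; apply/fsubsetP => x hx.
  by rewrite -[x]addr0; apply: hXY.
destruct (classic (exists e y, [/\ e \in X, y \in Y & e + y \notin X])) as
  [[e [y [he hy hey]]] | hno].
  pose Y' := [fset z in Y | e + z \in X].
  pose W := [fset (e + z)%R | z in Y `\` Y'].
  have hY'Y : Y' `<=` Y by apply/fsubsetP => z; rewrite !inE => /andP[].
  have hY'k : (#|`Y'| <= k)%N.
    have hsub : Y' `<=` Y `\ y.
      apply/fsubsetP => z; rewrite !inE => /andP[-> hz]; rewrite andbT.
      by apply/eqP => ezy; move: hey; rewrite -ezy hz.
    have := fsubset_leq_card hsub; have := cardfsD1 y Y; rewrite hy /=.
    move=> h1 h2; rewrite -ltnS; apply: leq_trans hY; rewrite h1 add1n ltnS; exact: h2.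
  have hW : #|`W| = #|`Y `\` Y'| by rewrite card_transl.
  have hYd := cardfsID Y' Y.
  have hYI : Y `&` Y' = Y' by apply/fsetIidPr.
  have hdisj : X `&` W = fset0.
    apply/eqP; rewrite -fsubset0; apply/fsubsetP => w; rewrite !inE.
    case/andP => hw /imfsetP [z /= hz wE]; subst w; move: hz hw; rewrite !inE.
    by case/andP => /negP hz1 hz2 hw; case: hz1; rewrite hz2 hw.
  have hU := cardfsUI X W; rewrite hdisj cardfs0 in hU.
  have := IH (X `|` W) Y' A x0 hY'k _ _ _ hA.
  rewrite -hYd hYI -hW; move: hU; rewrite addn0 => hU.
  move=> H; rewrite (addnC #|`Y'|) addnA -hU; apply: H.
  - by rewrite inE hx0.
  - by rewrite !inE h0 addr0 he.
  move=> x z; rewrite inE => /orP[hx | /imfsetP [w /= hw ->]] hz.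
    by apply: hXY => //; exact: (fsubsetP hY'Y).
  move: hz hw; rewrite !inE => /andP[hz1 hz2] /andP[_ hw].
  by rewrite addrAC; apply: hXY.
have hcl : forall e y, e \in X -> y \in Y -> e + y \in X.
  move=> e y he hy; apply/negPn/negP => hn; apply: hno; exists e, y; split => //.
destruct (classic (exists y, y \in Y /\ y != 0)) as [[y [hy hy0]] | hno2].
  pose H := fun g : G => forall z, (z + g \in X) = (z \in X).
  have Hy : H y.
    pose Xy := [fset (y + x)%R | x in X].
    have hXy : Xy = X.
      apply/eqP; rewrite eqEfcard card_transl leqnn andbT.
      apply/fsubsetP => w /imfsetP [x /= hx ->]; rewrite addrC; exact: hcl.
    move=> z; case hz: (z \in X); first exact: hcl.
    apply/negP => hzy; move: hzy; rewrite -hXy => /imfsetP [x /= hx].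
    rewrite addrC => /addrI ezx; by rewrite ezx hx in hz.
  have Hsub : is_subgroup H.
    split; first by move=> z; rewrite addr0.
    move=> a b Ha Hb z.
    by rewrite -(Hb (z + (a - b))) -addrA subrK Ha.
  pose s := [fset (x - x0)%R | x in X].
  have hs : forall g, H g -> g \in s.
    move=> g Hg; apply/imfsetP; exists (x0 + g); first by rewrite /= Hg.
    by rewrite [x0 + g]addrC addrK.
  have hex : exists x, H x /\ x <> 0 by exists y; split => //; exact/eqP.
  have := hp H Hsub hex s hs.
  rewrite card_transr => hm.
  have := leq_trans hm (leq_trans hXA hA); by rewrite ltnn.
have hY1 : (#|`Y| <= 1)%N.
  rewrite -(cardfs1 (0 : G)); apply: fsubset_leq_card; apply/fsubsetP => z hz.
  rewrite inE; apply/negPn/negP => hz0; apply: hno2; exists z; split => //.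
by apply: leq_add.
Qed.

Theorem theorem2p14 (G : zmodType) (M N : matroid G) (n : nat) :
  loopless M -> loopless N ->
  has_rank M n -> has_rank N n ->
  #|` ground M| = n.+1 -> #|` ground N| = n.+1 ->
  lt_pG G n.+1 ->
  sparse_paving N -> coloopless N ->
  0 \notin ground N ->
  matched M N.
Proof.
move=> _ _ hrM hrN hcM hcN hp _ hcol h0N BM hBM.
set A := ground M in hcM *; set B := ground N in hcN h0N *.
pose R := fun a b : G => a + b \notin A.
have hH : forall S', S' `<=` A -> (#|`S'| <= #|`nbh R B S'|)%N.
  move=> S' hS'; case: (eqVneq S' fset0) => [->|hS0]; first by rewrite cardfs0.
  have [x0 hx0] := fset0Pn _ hS0.
  set Nb := nbh R B S'.
  have hNB : Nb `<=` B by apply/fsubsetP => b; move/(@nbhP G G R B S' b) => [].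
  pose Y := 0 |` (B `\` Nb).
  have hY : #|`Y| = (1 + (#|`B| - #|`Nb|))%N.
    by rewrite cardfsU1 cardfsDS // in_fsetD (negbTE h0N) andbF.
  have hcl : forall x y, x \in S' -> y \in Y -> x + y \in A.
    move=> x y hx /fset1UP [->|/fsetDP [hyB hyN]].
      by rewrite addr0; exact: (fsubsetP hS').
    apply/negPn/negP => hxy; move: hyN => /negP; apply; apply/nbhP; split => //.
    by exists x.
  have := @dyson G n.+1 hp #|`Y| S' Y A x0 (leqnn _) hx0 (fsetU11 _ _) hcl (eq_leq hcM).
  have := fsubset_leq_card hNB.
  rewrite hY hcM hcN; lia.
have [f [injf hf]] := @hall G G R 0 #|`A| A B (leqnn _) hH.
have hBMA : BM `<=` A by exact: basis_sub hBM.
have injBM : {in BM &, injective f}.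
  by move=> x y hx hy; apply: injf; apply: (fsubsetP hBMA).
pose BN := [fset f x | x in BM].
have hBNc : #|`BN| = n by rewrite card_in_imfset //= hrM.
have hBNB : BN `<=` B.
  apply/fsubsetP => y /imfsetP [x /= hx ->].
  by have [] := hf x (fsubsetP hBMA x hx).
have [x hx] : exists x, x \in B `\` BN.
  apply/fset0Pn; rewrite -cardfs_gt0 cardfsDS // hcN hBNc; lia.
move: hx => /fsetDP [hxB hxBN].
have [B0 hB0 hxB0] : exists2 B0, basis N B0 & x \notin B0.
  apply: NNPP => hn; apply: (hcol x); split => // B0 hB0.
  apply/negPn/negP => hx0; apply: hn; by exists B0.
have hBx : #|`B `\ x| = n by have := cardfsD1 x B; rewrite hxB hcN /=; lia.
have e1 : BN = B `\ x.
  apply/eqP; rewrite eqEfcard hBx hBNc leqnn andbT.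
  apply/fsubsetP => y hy; apply/fsetD1P; split; last exact: (fsubsetP hBNB).
  by apply/eqP => eyx; move: hxBN; rewrite -eyx hy.
have e2 : B0 = B `\ x.
  apply/eqP; rewrite eqEfcard hBx (hrN _ hB0) leqnn andbT.
  apply/fsubsetP => y hy; apply/fsetD1P; split; last exact: (fsubsetP (basis_sub hB0)).
  by apply/eqP => eyx; move: hxB0; rewrite -eyx hy.
exists BN; first by rewrite e1 -e2.
exists f; split => //; split => // a ha.
by have [] := hf a (fsubsetP hBMA a ha).
Qed.
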